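(* Let $G$ be a graph on vertex set $[n]$ with Laplacian matrix $L$, let $k\ge2$ be an integer, let $J$ be the $n\times n$ all-ones matrix and $e\in\mathbb R^n$ the all-ones vector. Define $MkC_v(G)=\max\{\tfrac12\langle L,Z\rangle: Z,X\in\mathbb S^n,\ X_{ii}=0,\ Z_{ii}=1\ (i\in[n]),\ Z\ge0,\ X\ge0,\ Z-X\succeq0,\ Z+(k-1)X-J\succeq0\}$ and $MkC_m(G)=\max\{\tfrac12\langle L,Z\rangle: Z\in\mathbb S^n,\ Z_{ii}=1\ (i\in[n]),\ Z\ge0,\ Z-\tfrac1kJ\succeq0\}$; and define $Ek_v(G)$ and $Ek_m(G)$ as the corresponding minima of $\tfrac12\langle L,Z\rangle$ over the same feasible sets, each with the additional constraint $Ze=\tfrac nk e$. Then $MkC_v(G)=MkC_m(G)$ and $Ek_v(G)=Ek_m(G)$; more precisely, for each of the two pairs, every feasible solution of one problem yields a feasible solution of the other with the same objective value.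
   Context: $\mathbb S^n$ denotes real symmetric $n\times n$ matrices; $\langle A,B\rangle=\mathrm{trace}(AB)$; $\ge0$ entrywise nonnegativity; $\succeq0$ positive semidefiniteness. The Laplacian of $G$ is $L=D-A$ with $A$ the adjacency matrix and $D$ the diagonal degree matrix. *)

(* Defs.v *)
From HB Require Import structures.
From mathcomp Require Import all_boot all_order all_algebra.
From mathcomp Require Import reals.
Set Implicit Arguments. Unset Strict Implicit. Unset Printing Implicit Defensive.
Import Order.TTheory GRing.Theory Num.Theory.
Local Open Scope ring_scope.

Definition simple_graph (n : nat) (g : rel 'I_n) : Prop :=
  (forall i j, g i j = g j i) /\ (forall i, ~~ g i i).

Section Defs.
Variable R : realType.

Definition adjacency (n : nat) (g : rel 'I_n) : 'M[R]_n :=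
  \matrix_(i, j) (g i j)%:R.

Definition degree_mx (n : nat) (g : rel 'I_n) : 'M[R]_n :=
  diag_mx (\row_i (\sum_j (g i j)%:R)).

Definition laplacian (n : nat) (g : rel 'I_n) : 'M[R]_n :=
  degree_mx g - adjacency g.

Definition frob (n : nat) (A B : 'M[R]_n) : R := \tr (A *m B).

Definition symmetric (n : nat) (A : 'M[R]_n) : Prop := A^T = A.

Definition psd (n : nat) (A : 'M[R]_n) : Prop :=
  forall v : 'cV[R]_n, 0 <= ((v^T *m A *m v) 0 0).

Definition nonneg_mx (n : nat) (A : 'M[R]_n) : Prop := forall i j, 0 <= A i j.

Definition Jmx (n : nat) : 'M[R]_n := const_mx 1.
Definition evec (n : nat) : 'cV[R]_n := const_mx 1.

Definition obj (n : nat) (g : rel 'I_n) (Z : 'M[R]_n) : R :=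
  (frob (laplacian g) Z) / 2.

Definition feas_v (n k : nat) (Z X : 'M[R]_n) : Prop :=
  symmetric Z /\ symmetric X /\
  (forall i, X i i = 0) /\ (forall i, Z i i = 1) /\
  nonneg_mx Z /\ nonneg_mx X /\
  psd (Z - X) /\ psd (Z + (k.-1)%:R *: X - Jmx n).

Definition feas_m (n k : nat) (Z : 'M[R]_n) : Prop :=
  symmetric Z /\ (forall i, Z i i = 1) /\ nonneg_mx Z /\
  psd (Z - (k%:R)^-1 *: Jmx n).

Definition equip (n k : nat) (Z : 'M[R]_n) : Prop :=
  Z *m evec n = (n%:R / k%:R) *: evec n.

End Defs.

(* Main.v *)
Require Import Defs.
From HB Require Import structures.
From mathcomp Require Import all_boot all_order all_algebra.
From mathcomp Require Import reals.
From mathcomp Require Import ring lra.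
Import Order.TTheory GRing.Theory Num.Theory.
Local Open Scope ring_scope.

Lemma L1 (F : fieldType) (m z x : F) : m + 1 != 0 ->
  z - (m + 1)^-1 * 1 = (m + 1)^-1 * m * (z - x) + (m + 1)^-1 * (z + m * x - 1).
Proof. move=> h; field; exact: h. Qed.

Lemma L3 (F : fieldType) (m z : F) : m != 0 ->
  z + m * (m^-1 * (1 - z)) - 1 = 0.
Proof. move=> h; field; exact: h. Qed.

Lemma L2 (F : fieldType) (m z : F) : m != 0 -> m + 1 != 0 ->
  z - m^-1 * (1 - z) = (m + 1) / m * (z - (m + 1)^-1 * 1) + 0 * (z - (m + 1)^-1 * 1).
Proof. move=> h h'; field; by rewrite h h'. Qed.

Section H.
Variable R : realType.
Variable n : nat.

Definition bf (u : 'cV[R]_n) (A : 'M[R]_n) (w : 'cV[R]_n) : R := (u^T *m A *m w) 0 0.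

Lemma bfD A B v : bf v (A + B) v = bf v A v + bf v B v.
Proof. by rewrite /bf mulmxDr mulmxDl mxE. Qed.

Lemma bfZ (a : R) A v : bf v (a *: A) v = a * bf v A v.
Proof. by rewrite /bf -scalemxAr -scalemxAl mxE. Qed.

Lemma bf0 v : bf v 0 v = 0.
Proof. by rewrite /bf mulmx0 mul0mx mxE. Qed.

Lemma bfB u w A : bf (u - w) A (u - w) = bf u A u - bf u A w - bf w A u + bf w A w.
Proof.
rewrite /bf (mulmxBr ((u-w)^T *m A) u w) (linearB (@trmx R n 1) u w) /= (mulmxBl u^T w^T A) !mulmxBl !mxE.
ring.
Qed.

Lemma bfdelta i j A : bf (delta_mx i 0) A (delta_mx j 0) = A i j.
Proof. by rewrite /bf trmx_delta -rowE -colE !mxE. Qed.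

Lemma psd_comb (a b : R) (A B : 'M[R]_n) : 0 <= a -> 0 <= b -> psd A -> psd B -> psd (a *: A + b *: B).
Proof.
move=> ha hb pA pB v; have := bfD (a *: A) (b *: B) v; rewrite /bf => ->.
rewrite -!/(bf _ _ _) !bfZ; apply: addr_ge0; apply: mulr_ge0 => //.
exact: pA. exact: pB.
Qed.
End H.

Theorem mainTheorem11 (R : realType) (n : nat) (g : rel 'I_n) (k : nat) :
  simple_graph g -> (2 <= k)%N ->
  (* MkC_v vs MkC_m: feasible solutions correspond with equal objective *)
  ((forall Z X : 'M[R]_n, feas_v k Z X ->
      exists Z' : 'M[R]_n, feas_m k Z' /\ obj g Z' = obj g Z) /\
   (forall Z : 'M[R]_n, feas_m k Z ->
      exists Z' X' : 'M[R]_n, feas_v k Z' X' /\ obj g Z' = obj g Z)) /\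
  (* Ek_v vs Ek_m: same, with the extra constraint Z e = (n/k) e *)
  ((forall Z X : 'M[R]_n, feas_v k Z X -> equip k Z ->
      exists Z' : 'M[R]_n, (feas_m k Z' /\ equip k Z') /\ obj g Z' = obj g Z) /\
   (forall Z : 'M[R]_n, feas_m k Z -> equip k Z ->
      exists Z' X' : 'M[R]_n, (feas_v k Z' X' /\ equip k Z') /\ obj g Z' = obj g Z)).
Proof.
move=> _ hk.
have [m km] : exists m, k = m.+1 by exists k.-1; rewrite prednK // (leq_trans _ hk).
have m0 : 0 < m%:R :> R by rewrite ltr0n; rewrite km in hk.
have kE : k%:R = m%:R + 1 :> R by rewrite km -addn1 natrD.
have k0 : 0 < k%:R :> R by lra.
have km1 : (k.-1)%:R = m%:R :> R by rewrite km.
have vm : forall Z X : 'M[R]_n, feas_v k Z X -> feas_m k Z.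
  move=> Z X [sZ [sX [dX [dZ [nZ [nX [p1 p2]]]]]]]; split => //; split => //; split => //.
  have -> : Z - k%:R^-1 *: Jmx R n =
      (k%:R^-1 * m%:R) *: (Z - X) + k%:R^-1 *: (Z + (k.-1)%:R *: X - Jmx R n).
    apply/matrixP => i j; rewrite !mxE km1; rewrite kE; apply: L1; rewrite -kE; exact: lt0r_neq0.
  apply: psd_comb => //; [apply: mulr_ge0 | ]; rewrite ?invr_ge0; lra.
have mv : forall Z : 'M[R]_n, feas_m k Z ->
    feas_v k Z (m%:R^-1 *: (Jmx R n - Z)).
  move=> Z [sZ [dZ [nZ pZ]]].
  have Zs : forall i j, Z j i = Z i j.
    by move=> i j; rewrite -[in RHS]sZ mxE.
  have Z1 : forall i j, Z i j <= 1.
    move=> i j; case: (eqVneq i j) => [->|ij]; first by rewrite dZ.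
    have h : 0 <= @bf R n (delta_mx i 0 - delta_mx j 0) (Z - k%:R^-1 *: Jmx R n)
                    (delta_mx i 0 - delta_mx j 0) by exact: pZ.
    move: h; rewrite bfB !bfdelta !mxE !dZ Zs => h.
    lra.
  split => //; split.
    by apply/matrixP => i j; rewrite !mxE Zs.
  split; first by move=> i; rewrite !mxE dZ subrr mulr0.
  split => //; split => //; split.
    move=> i j; rewrite !mxE; apply: mulr_ge0; rewrite ?invr_ge0 ?subr_ge0; [lra|exact: Z1].
  split.
    have -> : Z - m%:R^-1 *: (Jmx R n - Z) =
      (k%:R / m%:R) *: (Z - k%:R^-1 *: Jmx R n) + 0 *: (Z - k%:R^-1 *: Jmx R n).
      apply/matrixP => i j; rewrite !mxE kE; apply: L2; [exact: lt0r_neq0 | rewrite -kE; exact: lt0r_neq0].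
    apply: psd_comb => //; apply: divr_ge0; lra.
  have -> : Z + (k.-1)%:R *: (m%:R^-1 *: (Jmx R n - Z)) - Jmx R n = 0.
    apply/matrixP => i j; rewrite !mxE km1; apply: L3; exact: lt0r_neq0.
  by move=> v; have := @bf0 R n v; rewrite /bf => ->.
split; split.
- move=> Z X h; exists Z; split => //; exact: vm h.
- move=> Z h; exists Z, (m%:R^-1 *: (Jmx R n - Z)); split => //; exact: mv.
- move=> Z X h e; exists Z; split => //; split => //; exact: vm h.
- move=> Z h e; exists Z, (m%:R^-1 *: (Jmx R n - Z)); split => //; split => //; exact: mv.
Qed.
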